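(* Let $E$ be a real Banach space, $K\subset E$ nonempty closed convex, $Y$ a real Banach space containing a closed, convex, pointed cone $C$ with nonempty interior, $T:K\to\mathcal P(K)$ a multivalued mapping, and $f:E\times E\to Y$ satisfying: (B1) $f(x,x)=0$ for all $x\in E$; (B2) $f$ is uniformly continuous on bounded subsets of $E\times E$; (B3) $f(x,\cdot)$ is $C$-convex for all $x\in E$. Then $DS(f,T)\subset S(f,T)$.
   Context: $y\preceq y'$ iff $y'-y\in C$. $G:E\to Y$ is $C$-convex if $G(tx+(1-t)y)\preceq tG(x)+(1-t)G(y)$ for all $x,y\in E$, $t\in[0,1]$. $S(f,T)=\{x\in K: x\in T(x),\ f(x,y)\notin-\mathrm{int}(C)\ \forall y\in T(x)\}$; $DS(f,T)=\{x\in K: x\in T(x),\ f(y,x)\in-C\ \forall y\in K\}$. *)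

(* Defs.v *)
From HB Require Import structures.
From mathcomp Require Import all_boot all_order all_algebra.
From mathcomp Require Import all_classical all_reals all_analysis.
Set Implicit Arguments. Unset Strict Implicit. Unset Printing Implicit Defensive.
Import Order.TTheory GRing.Theory Num.Theory.
Import numFieldNormedType.Exports.
Local Open Scope classical_set_scope.
Local Open Scope ring_scope.

Section Defs.
Context {R : realType}.

Definition is_cone {V : lmodType R} (C : set V) : Prop :=
  forall x (t : R), C x -> 0 <= t -> C (t *: x).

Definition pointed {V : lmodType R} (C : set V) : Prop :=
  C `&` [set y | C (- y)] = [set 0].

Definition cle {V : lmodType R} (C : set V) (y y' : V) : Prop := C (y' - y).

Definition C_convex {U V : lmodType R} (C : set V) (G : U -> V) : Prop :=
  forall x y (t : R), 0 <= t <= 1 ->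
    cle C (G (t *: x + (1 - t) *: y)) (t *: G x + (1 - t) *: G y).

Definition bounded_pairs {E : normedModType R} (B : set (E * E)) : Prop :=
  exists M : R, forall p, B p -> `|p.1| <= M /\ `|p.2| <= M.

Definition unif_cont_on_bounded {E Y : normedModType R} (f : E -> E -> Y) : Prop :=
  forall B : set (E * E), bounded_pairs B ->
  forall eps : R, 0 < eps -> exists2 delta : R, 0 < delta &
    forall p q, B p -> B q -> `|p.1 - q.1| < delta -> `|p.2 - q.2| < delta ->
      `|f p.1 p.2 - f q.1 q.2| < eps.

Definition Ssol {E Y : normedModType R} (C : set Y) (K : set E)
  (f : E -> E -> Y) (T : E -> set E) : set E :=
  [set x | K x /\ T x x /\ forall y, T x y -> ~ (interior C) (- f x y)].

Definition DSsol {E Y : normedModType R} (C : set Y) (K : set E)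
  (f : E -> E -> Y) (T : E -> set E) : set E :=
  [set x | K x /\ T x x /\ forall y, K y -> C (- f y x)].

End Defs.

(* Main.v *)
Require Import Defs.
From HB Require Import structures.
From mathcomp Require Import all_boot all_order all_algebra.
From mathcomp Require Import all_classical all_reals all_analysis.
From mathcomp Require Import ring lra.
Import Order.TTheory GRing.Theory Num.Theory.
Import numFieldNormedType.Exports.
Local Open Scope classical_set_scope.
Local Open Scope ring_scope.

Lemma conv_mem (R : realType) (M : lmodType R) (K : set M) x y (t : R) :
  convex_set K -> K x -> K y -> 0 <= t -> t <= 1 -> K (t *: x + (1 - t) *: y).
Proof.
move=> cK Kx Ky t0 t1.
have := cK x y (Itv01 t0 t1) (mem_set Kx) (mem_set Ky).
by rewrite inE.
Qed.

Arguments conv_mem {R M K x y t}.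

Lemma cone_add (R : realType) (M : lmodType R) (C : set M) a b :
  is_cone C -> convex_set C -> C a -> C b -> C (a + b).
Proof.
move=> cC vC Ca Cb.
have h : (0:R) <= 2^-1 by rewrite invr_ge0.
have h1 : (2^-1 : R) <= 1 by rewrite invf_le1 // ler1n.
have := cC _ 2 (conv_mem vC Ca Cb h h1) (ler0n _ 2).
rewrite scalerDr !scalerA.
have -> : (1 - 2^-1 : R) = 2^-1 by field.
by rewrite mulfV // !scale1r.
Qed.

Arguments cone_add {R M C a b}.

Lemma interior0 (R : realType) (Y : normedModType R) (C : set Y) :
  is_cone C -> interior C 0 -> C = setT.
Proof.
move=> cC /nbhs_ballP[e /= e0 sC].
apply/seteqP; split => // v _.
have [->|v0] := eqVneq v 0.
  by apply: sC; exact: ballxx.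
have nv : 0 < `|v| by rewrite normr_gt0.
pose w := (e / (2 * `|v|)) *: v.
have Cw : C w.
  apply: sC; rewrite -ball_normE /= sub0r normrN normrZ ger0_norm; last first.
    by apply: divr_ge0; [exact: ltW | rewrite mulr_ge0 // ltW].
  have -> : e / (2 * `|v|) * `|v| = e / 2 by field; rewrite gt_eqF.
  lra.
have := cC _ ((2 * `|v|) / e) Cw.
rewrite /w scalerA mulrA divfK ?gt_eqF // mulfV ?gt_eqF ?mulr_gt0 // scale1r.
by apply; apply: divr_ge0; [rewrite mulr_ge0 // ltW | exact: ltW].
Qed.

Arguments interior0 {R Y C}.

Theorem corollary2p16 (R : realType) (E Y : completeNormedModType R)
  (K : set E) (C : set Y) (T : E -> set E) (f : E -> E -> Y) :
  K !=set0 -> closed K -> convex_set K ->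
  closed C -> convex_set C -> is_cone C -> pointed C -> C <> setT ->
  interior C !=set0 ->
  (forall x, K x -> T x `<=` K) ->
  (forall x, f x x = 0) ->
  unif_cont_on_bounded f ->
  (forall x, C_convex C (f x)) ->
  DSsol C K f T `<=` Ssol C K f T.
Proof.
move=> _ _ cK clC cvC coC ptC CT _ TK f0 uc fcv x [Kx [Txx DSx]].
split => //; split => // y Txy intC.
have Ky := TK x Kx y Txy.
have key : forall t : R, 0 < t -> t <= 1 -> C (f (t *: y + (1 - t) *: x) y).
  move=> t t0 t1.
  set z := t *: y + (1 - t) *: x.
  have Kz : K z := conv_mem cK Ky Kx (ltW t0) t1.
  have hc := fcv z y x t; rewrite /cle -/z f0 subr0 in hc.
  have /hc {}hc : 0 <= t <= 1 by rewrite (ltW t0) t1.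
  have h2 : C ((1 - t) *: - f z x) by apply: coC; [exact: DSx | rewrite subr_ge0].
  have h3 := cone_add coC cvC hc h2.
  rewrite scalerN addrK in h3.
  have := coC _ t^-1 h3; rewrite scalerA mulVf ?gt_eqF // scale1r.
  by apply; rewrite invr_ge0 ltW.
have Cf : C (f x y).
  apply: clC => B /nbhs_ballP[e /= e0 sB].
  pose M := `|x| + `|y|.
  have nx := normr_ge0 x; have ny := normr_ge0 y.
  have bB : bounded_pairs [set p : E * E | `|p.1| <= M /\ `|p.2| <= M].
    by exists M => p.
  have [delta d0 hd] := uc _ bB e e0.
  pose d := `|x - y|.
  have dge0 : 0 <= d by exact: normr_ge0.
  have [t tE] : exists t, t = delta / (delta + d + 1) by eexists.
  have den0 : 0 < delta + d + 1 by lra.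
  have t0 : 0 < t by rewrite tE divr_gt0.
  have t1 : t <= 1 by rewrite tE ler_pdivrMr // mul1r; lra.
  set z := t *: y + (1 - t) *: x.
  exists (f z y); split; first exact: key.
  apply: sB; rewrite -ball_normE /=.
  apply: (hd (x, y) (z, y)) => /=.
  - by split; rewrite /M; lra.
  - split; last by rewrite /M; lra.
    have tg : 0 <= t by exact: ltW.
    have t1' : 0 <= 1 - t by rewrite subr_ge0.
    rewrite /z (le_trans (ler_normD _ _)) // !normrZ (ger0_norm tg) (ger0_norm t1').
    rewrite /M; nra.
  - have -> : x - z = t *: (x - y).
      rewrite /z scalerBr scalerBl scale1r opprD opprB addrA addrC addrA.
      by rewrite subrK.
    rewrite normrZ ger0_norm ?(ltW t0) // -/d tE.
    rewrite mulrAC ltr_pdivrMr // ; nra.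
  - by rewrite subrr normr0.
have Cmf : C (- f x y) by apply: interior_subset.
have : (C `&` [set y | C (- y)]) (f x y) by [].
rewrite ptC => /= fxy0.
rewrite fxy0 oppr0 in intC.
by apply: CT; apply: interior0.
Qed.
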